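(* Let $G$ be a finite abelian group of size $N$, let $\epsilon > 0$, $f:G\rightarrow \mathbb{R}$, and let $A\subseteq G$ have size $\alpha N$. Suppose that $B$ is a Bohr set in $G$ such that for every $t\in B$ \[\|f*1_A(\cdot + t) - f*1_A\|_{\infty} \leq \epsilon.\] Further assume that $\|f\|_1\leq 1/(2\alpha)$ and $f*1_A(0)\geq 1-\epsilon$. Then there exists $x\in G$ such that $B\cap (x+A)$ has density at least $2\alpha(1-2\epsilon)$ inside $B$, i.e. $|B\cap(x+A)|\geq 2\alpha(1-2\epsilon)|B|$.
   Context: For $\Gamma\subseteq\widehat{G}$ (the group of characters of $G$) and $0<\rho\leq 2$, the Bohr set $\mathrm{Bohr}(\Gamma,\rho)=\{x\in G: |1-\gamma(x)|\leq\rho \text{ for all }\gamma\in\Gamma\}$. Convolution: $f*g(x)=\sum_{t\in G}f(t)g(x-t)$. $\|f\|_1=\sum_{x}|f(x)|$, $\|f\|_\infty=\max_x|f(x)|$. *)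

(* Defs.v *)
From HB Require Import structures.
From mathcomp Require Import all_boot all_order all_algebra.
From mathcomp Require Import reals.
From mathcomp Require Import complex.
Set Implicit Arguments. Unset Strict Implicit. Unset Printing Implicit Defensive.
Import Order.TTheory GRing.Theory Num.Theory.
Local Open Scope ring_scope.
Local Open Scope complex_scope.

Definition is_character (R : rcfType) (G : finZmodType) (g : G -> R[i]) : Prop :=
  (forall x y : G, g (x + y) = g x * g y) /\ (forall x : G, `|g x| = 1).

Definition is_Bohr_set (R : rcfType) (G : finZmodType) (B : {set G}) : Prop :=
  exists (Gamma : (G -> R[i]) -> Prop) (rho : R),
    (forall g, Gamma g -> is_character g) /\ 0 < rho <= 2 /\
    (forall x : G, x \in B <-> (forall g, Gamma g -> `|1 - g x| <= rho%:C)).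

Definition conv (R : ringType) (G : finZmodType) (f g : G -> R) (x : G) : R :=
  \sum_(t : G) f t * g (x - t).

Definition indic (R : ringType) (G : finType) (A : {set G}) (x : G) : R :=
  (x \in A)%:R.

Definition norm1 (R : realDomainType) (G : finType) (f : G -> R) : R :=
  \sum_(x : G) `|f x|.

Definition normInf (R : realDomainType) (G : finType) (f : G -> R) : R :=
  \big[Num.max/0]_(x : G) `|f x|.

Definition translate (G : finZmodType) (x : G) (A : {set G}) : {set G} :=
  [set x + a | a in A].

(* Main.v *)
Require Import Defs.
From HB Require Import structures.
From mathcomp Require Import all_boot all_order all_algebra.
From mathcomp Require Import reals complex.
From mathcomp Require Import lra.
Import Order.TTheory GRing.Theory Num.Theory.
Local Open Scope ring_scope.

Lemma mem_translate (G : finZmodType) (s t : G) (A : {set G}) :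
  (t \in translate s A) = (t - s \in A).
Proof.
apply/imsetP/idP.
  by move=> [a aA ->]; rewrite addrC addKr.
by move=> H; exists (t - s) => //; rewrite addrC subrK.
Qed.

Theorem lemma1 (R : realType) (G : finZmodType) (eps alpha : R)
  (f : G -> R) (A B : {set G}) :
  0 < eps ->
  #|A|%:R = alpha * #|G|%:R ->
  is_Bohr_set R B ->
  (forall t, t \in B ->
     normInf (fun x => conv f (indic R A) (x + t) - conv f (indic R A) x) <= eps) ->
  norm1 f <= 1 / (2 * alpha) ->
  conv f (indic R A) 0 >= 1 - eps ->
  exists x : G,
    #|B :&: translate x A|%:R >= 2 * alpha * (1 - 2 * eps) * #|B|%:R.
Proof.
move=> eps0 hA _ hB hf h0.
pose c (x : G) := #|B :&: translate x A|.
pose x0 := [arg max_(x > (0:G)) c x].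
have cmax : forall s, (c s <= c x0)%N.
  by rewrite /x0; case: arg_maxnP => // y _ H s; apply: H.
exists x0.
have G0 : (0 < #|G|)%N by apply/card_gt0P; exists 0.
have a0 : 0 <= alpha.
  have : 0 <= alpha * #|G|%:R by rewrite -hA.
  by rewrite pmulr_lge0 // ltr0n.
have hc : forall t, t \in B -> 1 - 2 * eps <= conv f (indic R A) t.
  move=> t tB; have := hB t tB; rewrite /normInf (bigD1 0) //= ge_max add0r => /andP[H _].
  have := ler_norml (conv f (indic R A) t - conv f (indic R A) 0) eps.
  rewrite H => /esym/andP[H1 _]; lra.
have key : \sum_(t in B) conv f (indic R A) t = \sum_s f s * (c s)%:R.
  rewrite /conv exchange_big /=; apply: eq_bigr => s _.
  rewrite -mulr_sumr; congr (_ * _).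
  rewrite /c /indic -natr_sum; congr (_%:R).
  rewrite (eq_bigr (fun t => if t \in translate s A then 1%N else 0%N)); last first.
    by move=> t _; rewrite mem_translate; case: (_ \in _).
  rewrite -big_mkcondr /= -sum1_card; apply: eq_bigl => t; by rewrite in_setI.
have lo : (1 - 2 * eps) * #|B|%:R <= \sum_(t in B) conv f (indic R A) t.
  rewrite (_ : _ * _ = \sum_(t in B) (1 - 2 * eps)); last by rewrite sumr_const mulr_natr.
  exact: ler_sum.
have hi : \sum_s f s * (c s)%:R <= norm1 f * (c x0)%:R.
  rewrite /norm1 mulr_suml; apply: ler_sum => s _.
  apply: le_trans (ler_norm _) _; rewrite normrM normr_nat ler_wpM2l //.
  by rewrite ler_nat.
have C0 : 0 <= (c x0)%:R :> R by rewrite ler0n.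
have h2 : norm1 f * (c x0)%:R <= 1 / (2 * alpha) * (c x0)%:R by rewrite ler_wpM2r.
have h3 : (1 - 2 * eps) * #|B|%:R <= 1 / (2 * alpha) * (c x0)%:R.
  by rewrite (le_trans lo) // key (le_trans hi).
case: (eqVneq alpha 0) => [->|an0]; first by rewrite mulr0 !mul0r.
have ap : 0 < alpha by rewrite lt_neqAle eq_sym an0.
have a2 : 0 <= 2 * alpha by rewrite mulr_ge0.
have h4 := ler_wpM2l a2 h3.
have -> : (c x0)%:R = 2 * alpha * (1 / (2 * alpha) * (c x0)%:R) :> R.
  by rewrite mulrA div1r mulfV ?mul1r // mulf_neq0 // pnatr_eq0.
move: h4; rewrite mulrA; exact: id.
Qed.
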